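(* Let $\mathcal{G}$ be an infinite prefilter on $\omega$. Then either $\mathcal{G}$ is homeomorphic to the Cantor set $2^\omega$, or $\mathcal{G}$ is homeomorphic to some filter on $\omega$.
   Context: A prefilter on $\omega$ is a collection $\mathcal{G}\subseteq\mathcal{P}(\omega)$ that is upward-closed ($x\in\mathcal{G}$, $x\subseteq y\subseteq\omega$ implies $y\in\mathcal{G}$) and closed under finite intersections. A filter on $\omega$ is a collection $\mathcal{F}\subseteq\mathcal{P}(\omega)$ that is upward-closed, closed under finite intersections, closed under finite modifications (if $x\in\mathcal{F}$ and $y\subseteq\omega$ differs from $x$ by a finite set then $y\in\mathcal{F}$), with $\varnothing\notin\mathcal{F}$ and $\omega\in\mathcal{F}$. Subsets of $\mathcal{P}(\omega)$ are identified via characteristic functions with subspaces of $2^\omega$. *)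

(* Defs.v *)
(* Subsets of omega = characteristic functions nat -> bool,
   i.e. points of the Cantor space 2^omega; a family of subsets is a
   predicate on (nat -> bool), i.e. a subspace of 2^omega. *)
From Stdlib Require Import List Arith.

Definition subset_om (x y : nat -> bool) : Prop :=
  forall n, x n = true -> y n = true.

Definition inter_om (x y : nat -> bool) : nat -> bool :=
  fun n => andb (x n) (y n).

Definition fin_mod (x y : nat -> bool) : Prop :=
  exists N, forall n, N <= n -> x n = y n.

Definition empty_om : nat -> bool := fun _ => false.
Definition full_om : nat -> bool := fun _ => true.

Definition is_prefilter (G : (nat -> bool) -> Prop) : Prop :=
  (forall x y, G x -> subset_om x y -> G y) /\
  (forall x y, G x -> G y -> G (inter_om x y)).

Definition is_filter (F : (nat -> bool) -> Prop) : Prop :=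
  (forall x y, F x -> subset_om x y -> F y) /\
  (forall x y, F x -> F y -> F (inter_om x y)) /\
  (forall x y, F x -> fin_mod x y -> F y) /\
  ~ F empty_om /\
  F full_om.

Definition infinite_family (G : (nat -> bool) -> Prop) : Prop :=
  ~ exists l : list (nat -> bool), forall x, G x -> In x l.

(* Continuity of f on the subspace X of 2^omega (product topology,
   via its standard basis of cylinders determined by finite initial segments). *)
Definition agree_upto (m : nat) (x y : nat -> bool) : Prop :=
  forall k, k < m -> x k = y k.

Definition continuous_on (X : (nat -> bool) -> Prop)
  (f : (nat -> bool) -> (nat -> bool)) : Prop :=
  forall x, X x -> forall n, exists m, forall y, X y ->
    agree_upto m x y -> agree_upto n (f x) (f y).

Definition homeomorphic (X Y : (nat -> bool) -> Prop) : Prop :=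
  exists (f g : (nat -> bool) -> (nat -> bool)),
    (forall x, X x -> Y (f x)) /\
    (forall y, Y y -> X (g y)) /\
    (forall x, X x -> forall n, g (f x) n = x n) /\
    (forall y, Y y -> forall n, f (g y) n = y n) /\
    continuous_on X f /\ continuous_on Y g.

Definition cantor_space : (nat -> bool) -> Prop := fun _ => True.

(* Main.v *)
Require Import Defs.
From Stdlib Require Import List Arith.
From Stdlib Require Import Lia Classical ClassicalEpsilon FunctionalExtensionality ConstructiveEpsilon.

Fixpoint rk (k : nat -> bool) (n : nat) : nat :=
  match n with 0 => 0 | S n => rk k n + (if k n then 0 else 1) end.

Lemma rk_le k n : rk k n <= n.
Proof. induction n; simpl; [lia|]. destruct (k n); lia. Qed.

Lemma rk_mono k a b : a <= b -> rk k a <= rk k b.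
Proof. induction 1; simpl; [lia|]. destruct (k m); lia. Qed.

Lemma ex_i k (H : forall N, exists M, N <= rk k M) i : exists n, i < rk k (S n).
Proof.
  destruct (H (S i)) as [M HM]. destruct M as [|p]; simpl in HM; [lia|].
  exists p. simpl. lia.
Qed.

Definition ek k (H : forall N, exists M, N <= rk k M) (i : nat) : nat :=
  proj1_sig (epsilon_smallest (fun n => i < rk k (S n))
     (fun n => lt_dec i (rk k (S n))) (ex_i k H i)).

Lemma ek_spec k H i : i < rk k (S (ek k H i)) /\
  forall m, i < rk k (S m) -> ek k H i <= m.
Proof. unfold ek. destruct (epsilon_smallest _ _ _) as [n [H1 H2]]. simpl. auto. Qed.

Lemma ek_D k H i : k (ek k H i) = false /\ rk k (ek k H i) = i.
Proof.
  destruct (ek_spec k H i) as [H1 H2].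
  assert (Hr : rk k (ek k H i) <= i).
  { destruct (ek k H i) as [|p] eqn:E; simpl; [lia|].
    destruct (le_lt_dec (rk k (S p)) i) as [h|h]; [exact h|].
    specialize (H2 p h). lia. }
  simpl in H1. destruct (k (ek k H i)); [lia|]. split; [reflexivity|lia].
Qed.

Lemma ek_rk k H n : k n = false -> ek k H (rk k n) = n.
Proof.
  intro Hn. destruct (ek_spec k H (rk k n)) as [_ H2].
  assert (h1 : ek k H (rk k n) <= n) by (apply H2; simpl; rewrite Hn; lia).
  destruct (ek_D k H (rk k n)) as [Hk Hr].
  destruct (Nat.eq_dec (ek k H (rk k n)) n) as [e|ne]; [exact e|].
  assert (rk k (S (ek k H (rk k n))) <= rk k n) by (apply rk_mono; lia).
  simpl in H0. rewrite Hk, Hr in H0. lia.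
Qed.

Lemma ek_lt k H i M : i < rk k M -> ek k H i < M.
Proof.
  intro h. destruct M as [|p]; simpl in h; [lia|].
  destruct (ek_spec k H i) as [_ H2].
  assert (ek k H i <= p) by (apply H2; simpl; exact h). lia.
Qed.

Lemma fin_list N : exists l, forall x : nat -> bool,
  (forall n, N <= n -> x n = true) -> In x l.
Proof.
  induction N as [|N IH].
  - exists (full_om :: nil). intros x Hx. left.
    apply functional_extensionality. intro n. symmetry. apply Hx. lia.
  - destruct IH as [l Hl].
    exists (map (fun h n => if n =? N then true else h n) l ++
            map (fun h n => if n =? N then false else h n) l).
    intros x Hx.
    pose (x' := fun n => if n =? N then true else x n).
    assert (Hx' : In x' l).
    { apply Hl. intros n Hn. unfold x'. destruct (n =? N) eqn:E; [reflexivity|].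
      apply Nat.eqb_neq in E. apply Hx. lia. }
    apply in_or_app. destruct (x N) eqn:XN.
    + left. apply in_map_iff. exists x'. split; [|exact Hx'].
      apply functional_extensionality. intro n. unfold x'.
      destruct (n =? N) eqn:E; [apply Nat.eqb_eq in E; subst; auto|reflexivity].
    + right. apply in_map_iff. exists x'. split; [|exact Hx'].
      apply functional_extensionality. intro n. unfold x'.
      destruct (n =? N) eqn:E; [apply Nat.eqb_eq in E; subst; auto|reflexivity].
Qed.

Theorem mainTheorem2 (G : (nat -> bool) -> Prop) :
  is_prefilter G -> infinite_family G ->
  homeomorphic G cantor_space \/
  exists F : (nat -> bool) -> Prop, is_filter F /\ homeomorphic G F.
Proof.
  intros [Hup Hint] Hinf.
  assert (Hne : exists x0, G x0).
  { apply NNPP. intro C. apply Hinf. exists nil. intros x Gx. apply C. eauto. }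
  destruct Hne as [x0 Gx0].
  pose (k := fun n => if excluded_middle_informative (forall x, G x -> x n = true)
                      then true else false).
  assert (kT : forall n, k n = true -> forall x, G x -> x n = true).
  { intros n. unfold k. destruct (excluded_middle_informative _); auto. discriminate. }
  assert (kF : forall n, k n = false -> exists x, G x /\ x n = false).
  { intros n. unfold k. destruct (excluded_middle_informative _) as [h|h]; [discriminate|].
    intros _. apply not_all_ex_not in h. destruct h as [x hx].
    exists x. destruct (classic (G x)) as [gx|gx]; [|exfalso; apply hx; tauto].
    split; auto. destruct (x n); auto. exfalso; apply hx; auto. }
  assert (Dinf : forall N, exists n, N <= n /\ k n = false).
  { intro N. apply NNPP. intro C.
    destruct (fin_list N) as [l Hl]. apply Hinf. exists l. intros x Gx. apply Hl.
    intros n Hn. apply kT; auto. destruct (k n) eqn:E; auto. exfalso. apply C. eauto. }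
  assert (Hunb : forall N, exists M, N <= rk k M).
  { induction N as [|N IH]; [exists 0; lia|].
    destruct IH as [M HM]. destruct (Dinf M) as [n [Hn Hk]].
    exists (S n). simpl. rewrite Hk. pose proof (rk_mono k M n Hn). lia. }
  pose (e := ek k Hunb).
  pose (f := fun (x : nat -> bool) i => x (e i)).
  pose (g := fun (y : nat -> bool) n => if k n then true else y (rk k n)).
  assert (gf : forall x, G x -> forall n, g (f x) n = x n).
  { intros x Gx n. unfold g, f. destruct (k n) eqn:E.
    - symmetry; apply kT; auto.
    - unfold e. rewrite ek_rk; auto. }
  assert (fg : forall y i, f (g y) i = y i).
  { intros y i. unfold f, g. destruct (ek_D k Hunb i) as [h1 h2].
    unfold e. rewrite h1, h2. reflexivity. }
  assert (contf : forall X, continuous_on X f).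
  { intros X x _ n. destruct (Hunb n) as [M HM]. exists M. intros y _ Ha i Hi.
    unfold f. apply Ha. unfold e. apply ek_lt. lia. }
  assert (contg : forall X, continuous_on X g).
  { intros X x _ n. exists n. intros y _ Ha i Hi.
    unfold g. destruct (k i); auto. apply Ha. pose proof (rk_le k i). lia. }
  assert (Gsub : forall x, G x -> subset_om x (g (f x))).
  { intros x Gx n h. rewrite gf; auto. }
  destruct (classic (G k)) as [Gk|Gk].
  - left. exists f, g. repeat split; auto.
    + intros y _. apply (Hup k). auto. intros n h. unfold g. rewrite h. reflexivity.
  - right. exists (fun y => G (g y)). split.
    + repeat split.
      * intros y y' Gy S. apply (Hup (g y)); auto. intros n. unfold g.
        destruct (k n); auto.
      * intros y y' Gy Gy'. apply (Hup (inter_om (g y) (g y'))); auto.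
        intros n. unfold g, inter_om. destruct (k n); auto.
      * intros y y' Gy [N HN].
        assert (Z : forall M, exists z, G z /\ forall n, n < M -> k n = false -> z n = false).
        { induction M as [|M IH]; [exists x0; split; auto; intros; lia|].
          destruct IH as [z [Gz Hz]]. destruct (k M) eqn:E.
          - exists z. split; auto. intros n Hn Hk.
            destruct (Nat.eq_dec n M); [subst; congruence|]. apply Hz; auto; lia.
          - destruct (kF M E) as [w [Gw Hw]]. exists (inter_om z w). split; auto.
            intros n Hn Hk. unfold inter_om.
            destruct (Nat.eq_dec n M); [subst; rewrite Hw; apply Bool.andb_false_r|].
            rewrite Hz; auto; lia. }
        destruct (Hunb N) as [M HM]. destruct (Z M) as [z [Gz Hz]].
        apply (Hup (inter_om (g y) z)); auto.
        intros n. unfold inter_om, g. destruct (k n) eqn:E; auto.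
        destruct (le_lt_dec N (rk k n)) as [h|h].
        -- rewrite HN; auto. intro H1. apply Bool.andb_true_iff in H1. tauto.
        -- assert (n < M).
           { destruct (le_lt_dec M n) as [h'|h']; auto.
             pose proof (rk_mono k M n h'). lia. }
           rewrite (Hz n); auto. rewrite Bool.andb_false_r. discriminate.
      * intro Ge. apply Gk. apply (Hup (g empty_om)); auto.
        intros n. unfold g, empty_om. destruct (k n); auto.
      * apply (Hup x0); auto. intros n _. unfold g, full_om. destruct (k n); auto.
    + exists f, g. repeat split; auto.
      * intros x Gx. apply (Hup x); auto.
Qed.
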